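(* Let $\nu>0$ and let $K\in\mathbb N$ be fixed, with index set $\mathcal K=\{(k_1,k_2)\in\mathbb Z^2\setminus\{0\}: -K\le k_1,k_2\le K\}$. Let $f$ be a real, $2\pi$-periodic, divergence-free, mean-zero body force on $[0,2\pi]^2$ whose Fourier coefficients vanish outside $\{k\in\mathcal K: |k|^2\le \lambda_M\}$ for some $\lambda_M\ge 1$. Let $g=\operatorname{curl} f$ with Fourier coefficients $g_k$, and set $\lambda_0=\min\{|k|^2:k\in\mathcal K\}=1$. For a real trigonometric polynomial $\omega(x)=\sum_{k\in\mathcal K}\omega_k e^{ik\cdot x}$ (so $\omega_{-k}=\overline{\omega_k}$) define $u(x)=\sum_{k\in\mathcal K}\frac{i(k_2,-k_1)}{|k|^2}\omega_k e^{ik\cdot x}$ and $|\omega|^2=\|\omega\|_{L^2}^2=4\pi^2\sum_{k\in\mathcal K}|\omega_k|^2$. For a time step $h>0$ define the map $S$ by $$S(\omega)_k=\big\{\omega_k-h\,(u\cdot\nabla\omega)_k\big\}e^{-\nu|k|^2h}+\frac{2g_k}{\nu|k|^2}e^{-\nu|k|^2h/2}\sinh(\nu|k|^2h/2),\qquad k\in\mathcal K,$$ where $(u\cdot\nabla\omega)_k$ denotes the $k$-th Fourier coefficient of $u\cdot\nabla\omega$ (only $k\in\mathcal K$ are retained), and let $\omega^{n+1}=S(\omega^n)$ for $n=0,1,2,\dots$. Let $$B=c_0\frac{\|f\|_{L^2}}{\nu\lambda_0^{1/2}}\qquad\text{with}\qquad c_0>6\lambda_M/\lambda_0 .$$ Then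 for every $L>0$ there exist $h>0$ sufficiently small and $N\in\mathbb N$ sufficiently large (depending on $L$, $K$, $\nu$, $\lambda_M$, $c_0$, $f$) such that for every initial datum $\omega^0$ with $|\omega^0|<L$ one has $|\omega^n|<B$ for all $n\ge N$.
   Context: This is a fully dealiased spectral Galerkin discretization of the two-dimensional incompressible Navier–Stokes equations in vorticity form $\partial_t\omega-\nu\Delta\omega+u\cdot\nabla\omega=g$ on the $2\pi$-periodic box, with linear terms integrated exactly in time and the nonlinear term by the forward Euler method. Here $\operatorname{curl}u=\partial u_2/\partial x_1-\partial u_1/\partial x_2$. *)

(* Defs.v *)
From Stdlib Require Import Reals Lra ZArith List Bool.
Open Scope R_scope.

Definition C := (R * R)%type.
Definition C0 : C := (0, 0).
Definition Ci : C := (0, 1).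
Definition Cadd (a b : C) : C := (fst a + fst b, snd a + snd b).
Definition Cmul (a b : C) : C :=
  (fst a * fst b - snd a * snd b, fst a * snd b + snd a * fst b).
Definition Cscale (r : R) (a : C) : C := (r * fst a, r * snd a).
Definition Cconj (a : C) : C := (fst a, - snd a).
Definition Cnorm2 (a : C) : R := fst a ^ 2 + snd a ^ 2.

Definition wv := (Z * Z)%type.
Definition wneg (k : wv) : wv := ((- fst k)%Z, (- snd k)%Z).
Definition ksq (k : wv) : R := IZR (fst k) ^ 2 + IZR (snd k) ^ 2.

Definition zrange (K : nat) : list Z :=
  map (fun n => (Z.of_nat n - Z.of_nat K)%Z) (seq 0 (2 * K + 1)).
Definition idx (K : nat) : list wv :=
  filter (fun k => negb (Z.eqb (fst k) 0 && Z.eqb (snd k) 0))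
         (list_prod (zrange K) (zrange K)).

Definition Csum (l : list wv) (F : wv -> C) : C :=
  fold_right (fun k acc => Cadd (F k) acc) C0 l.
Definition Rsum (l : list wv) (F : wv -> R) : R :=
  fold_right (fun k acc => F k + acc) 0 l.

(** Scalar fields (vorticity) by Fourier coefficients  w(x) = sum_k w_k e^{ik.x};
    vector fields (force) by pairs of coefficients. *)
Definition sfield := wv -> C.
Definition vfield := wv -> (C * C)%type.

Definition real_sfield (K : nat) (w : sfield) : Prop :=
  forall k, In k (idx K) -> w (wneg k) = Cconj (w k).

Definition snorm (K : nat) (w : sfield) : R :=
  sqrt (4 * PI ^ 2 * Rsum (idx K) (fun k => Cnorm2 (w k))).

(** ||f||_{L^2} (f is supported in the index set) *)
Definition vnorm (K : nat) (f : vfield) : R :=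
  sqrt (4 * PI ^ 2 * Rsum (idx K) (fun k => Cnorm2 (fst (f k)) + Cnorm2 (snd (f k)))).

Definition force_ok (K : nat) (lamM : R) (f : vfield) : Prop :=
  (forall k, f (wneg k) = (Cconj (fst (f k)), Cconj (snd (f k)))) /\
  (forall k, Cadd (Cscale (IZR (fst k)) (fst (f k)))
                  (Cscale (IZR (snd k)) (snd (f k))) = C0) /\
  f (0%Z, 0%Z) = (C0, C0) /\
  (forall k, ~ (In k (idx K) /\ ksq k <= lamM) -> f k = (C0, C0)).

(** g = curl f = d f2/dx1 - d f1/dx2 :  g_k = i k1 (f2)_k - i k2 (f1)_k *)
Definition curl (f : vfield) : sfield :=
  fun k => Cadd (Cmul Ci (Cscale (IZR (fst k)) (snd (f k))))
                (Cscale (-1) (Cmul Ci (Cscale (IZR (snd k)) (fst (f k))))).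

Definition uhat (w : sfield) (j : wv) : (C * C)%type :=
  (Cmul Ci (Cscale (IZR (snd j) / ksq j) (w j)),
   Cmul Ci (Cscale (- IZR (fst j) / ksq j) (w j))).
Definition gradhat (w : sfield) (l : wv) : (C * C)%type :=
  (Cmul Ci (Cscale (IZR (fst l)) (w l)), Cmul Ci (Cscale (IZR (snd l)) (w l))).

(** k-th Fourier coefficient of u . grad omega (product of two trigonometric
    polynomials over the index set, i.e. convolution of coefficients). *)
Definition advect (K : nat) (w : sfield) (k : wv) : C :=
  Csum (idx K) (fun j => Csum (idx K) (fun l =>
    if andb (Z.eqb (fst j + fst l)%Z (fst k)) (Z.eqb (snd j + snd l)%Z (snd k))
    then Cadd (Cmul (fst (uhat w j)) (fst (gradhat w l)))
              (Cmul (snd (uhat w j)) (snd (gradhat w l)))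
    else C0)).

Definition Sstep (nu h : R) (K : nat) (g : sfield) (w : sfield) : sfield :=
  fun k =>
    Cadd (Cscale (exp (- nu * ksq k * h)) (Cadd (w k) (Cscale (- h) (advect K w k))))
         (Cscale (2 / (nu * ksq k) * exp (- nu * ksq k * h / 2) * sinh (nu * ksq k * h / 2))
                 (g k)).

(** lambda_0 = min {|k|^2 : k in K} = 1 *)
Definition lambda0 : R := 1.

(* Main.v *)
Require Import Defs.
From Stdlib Require Import Reals Lra Lia ZArith List Permutation.
Open Scope R_scope.

Lemma in_zrange K z : In z (zrange K) <-> (- Z.of_nat K <= z <= Z.of_nat K)%Z.
Proof.
  unfold zrange; rewrite in_map_iff; split.
  - intros [n [<- Hn]]. apply in_seq in Hn. lia.
  - intros H. exists (Z.to_nat (z + Z.of_nat K)). split.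
    + rewrite Z2Nat.id; lia.
    + apply in_seq. lia.
Qed.

Lemma in_idx K k : In k (idx K) <->
  ((- Z.of_nat K <= fst k <= Z.of_nat K)%Z /\ (- Z.of_nat K <= snd k <= Z.of_nat K)%Z
   /\ ~ (fst k = 0%Z /\ snd k = 0%Z)).
Proof.
  unfold idx. rewrite filter_In. destruct k as [a b].
  pose proof (in_prod_iff (zrange K) (zrange K) a b) as HP.
  change (In (a, b) (list_prod (zrange K) (zrange K))) with (In (a, b) (list_prod (zrange K) (zrange K))).
  rewrite <- !in_zrange. simpl. split; [intros [H1 H2]; apply HP in H1|intros (H1&H2&H3); split; [apply HP; auto|]]; destruct (Z.eqb_spec a 0), (Z.eqb_spec b 0); simpl in *; intuition.
Qed.
Lemma dummy : True. Proof. exact I.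
Qed.

Lemma NoDup_prod {A B} (l : list A) (l' : list B) :
  NoDup l -> NoDup l' -> NoDup (list_prod l l').
Proof.
  induction 1 as [|a l Ha Hl IH]; intros H'; simpl; [constructor|].
  apply NoDup_app.
  - apply FinFun.Injective_map_NoDup; auto. intros x y E; now inversion E.
  - auto.
  - intros [x y] H1 H2. apply in_map_iff in H1. destruct H1 as [z [E _]].
    inversion E; subst. apply in_prod_iff in H2. tauto.
Qed.

Lemma NoDup_idx K : NoDup (idx K).
Proof.
  unfold idx. apply NoDup_filter. unfold zrange.
  apply NoDup_prod; apply FinFun.Injective_map_NoDup; try apply seq_NoDup;
  intros x y E; lia.
Qed.

Lemma idx_neg K k : In k (idx K) -> In (wneg k) (idx K).
Proof. rewrite !in_idx; destruct k; simpl; lia. Qed.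

Lemma perm_idx K : Permutation (map wneg (idx K)) (idx K).
Proof.
  apply NoDup_Permutation.
  - apply FinFun.Injective_map_NoDup; [|apply NoDup_idx].
    intros [a b] [c d] E; unfold wneg in E; simpl in E; inversion E; f_equal; lia.
  - apply NoDup_idx.
  - intros x; rewrite in_map_iff; split.
    + intros [y [<- Hy]]. now apply idx_neg.
    + intros Hx. exists (wneg x). split; [destruct x; unfold wneg; simpl; f_equal; lia|].
      now apply idx_neg.
Qed.

Lemma Rsum_ext_in l F G : (forall x, In x l -> F x = G x) -> Rsum l F = Rsum l G.
Proof. induction l; simpl; intros H; auto. rewrite H, IHl; auto. Qed.
Lemma Rsum_plus l F G : Rsum l (fun x => F x + G x) = Rsum l F + Rsum l G.
Proof. induction l; simpl; [lra|]. rewrite IHl; lra. Qed.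
Lemma Rsum_scal l c F : Rsum l (fun x => c * F x) = c * Rsum l F.
Proof. induction l; simpl; [lra|]. rewrite IHl; lra. Qed.
Lemma Rsum_opp l F : Rsum l (fun x => - F x) = - Rsum l F.
Proof. induction l; simpl; [lra|]. rewrite IHl; lra. Qed.
Lemma Rsum_le_in l F G : (forall x, In x l -> F x <= G x) -> Rsum l F <= Rsum l G.
Proof. induction l; simpl; intros H; [lra|]. specialize (IHl (fun x h => H x (or_intror h))).
  specialize (H a (or_introl eq_refl)). lra. Qed.
Lemma Rsum_nonneg l F : (forall x, In x l -> 0 <= F x) -> 0 <= Rsum l F.
Proof. induction l; simpl; intros H; [lra|]. specialize (IHl (fun x h => H x (or_intror h))).
  specialize (H a (or_introl eq_refl)). lra. Qed.
Lemma Rsum_term_le l F x : In x l -> (forall y, In y l -> 0 <= F y) -> F x <= Rsum l F.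
Proof. induction l; simpl; intros Hx H; [tauto|].
  destruct Hx as [<-|Hx].
  - assert (0 <= Rsum l F) by (apply Rsum_nonneg; auto). lra.
  - assert (F x <= Rsum l F) by auto. specialize (H a (or_introl eq_refl)). lra. Qed.
Lemma Rsum_abs l F : Rabs (Rsum l F) <= Rsum l (fun x => Rabs (F x)).
Proof. induction l; simpl. rewrite Rabs_R0; lra.
  eapply Rle_trans; [apply Rabs_triang|]. lra. Qed.
Lemma Rsum_const_le l F c : (forall x, In x l -> F x <= c) -> Rsum l F <= INR (length l) * c.
Proof. induction l; intros H; [simpl; lra|]. specialize (IHl (fun x h => H x (or_intror h))).
  specialize (H a (or_introl eq_refl)). change (length (a :: l)) with (S (length l)). rewrite S_INR.
  change (Rsum (a :: l) F) with (F a + Rsum l F). lra. Qed.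
Lemma Rsum_exchange (l1 l2 : list wv) F :
  Rsum l1 (fun x => Rsum l2 (fun y => F x y)) = Rsum l2 (fun y => Rsum l1 (fun x => F x y)).
Proof. induction l1; simpl.
  - induction l2; simpl; auto; rewrite <- IHl2; lra.
  - rewrite IHl1, <- Rsum_plus. reflexivity. Qed.
Lemma Rsum_perm l1 l2 F : Permutation l1 l2 -> Rsum l1 F = Rsum l2 F.
Proof. induction 1; simpl; auto; try lra. Qed.
Lemma Rsum_map g l F : Rsum (map g l) F = Rsum l (fun x => F (g x)).
Proof. induction l; simpl; auto. rewrite IHl; auto. Qed.
Lemma Rsum_neg K F : Rsum (idx K) (fun k => F (wneg k)) = Rsum (idx K) F.
Proof. rewrite <- Rsum_map. apply Rsum_perm, perm_idx. Qed.
Lemma Csum_eq l F : Csum l F = (Rsum l (fun k => fst (F k)), Rsum l (fun k => snd (F k))).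
Proof. induction l; simpl; auto. rewrite IHl. reflexivity. Qed.

Definition cr (j l : wv) : R :=
  (IZR (fst j) * IZR (snd l) - IZR (snd j) * IZR (fst l)) / ksq j.
Definition indc (j l k : wv) : R :=
  if andb (Z.eqb (fst j + fst l)%Z (fst k)) (Z.eqb (snd j + snd l)%Z (snd k)) then 1 else 0.

Lemma term_eq w j l :
  Cadd (Cmul (fst (uhat w j)) (fst (gradhat w l))) (Cmul (snd (uhat w j)) (snd (gradhat w l)))
  = Cscale (cr j l) (Cmul (w j) (w l)).
Proof.
  unfold uhat, gradhat, cr, Cadd, Cmul, Cscale, Ci; simpl.
  destruct (w j) as [a b], (w l) as [c d]; simpl. f_equal; unfold Rdiv; ring.
Qed.

Lemma advect_fst K w k : fst (advect K w k) =
  Rsum (idx K) (fun j => Rsum (idx K) (fun l => indc j l k * (cr j l * fst (Cmul (w j) (w l))))).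
Proof.
  unfold advect. rewrite Csum_eq; cbn [fst snd]. apply Rsum_ext_in; intros j _.
  rewrite Csum_eq; cbn [fst snd]. apply Rsum_ext_in; intros l _.
  unfold indc. destruct (andb _ _); [rewrite term_eq; simpl; ring|simpl; ring].
Qed.

Lemma advect_snd K w k : snd (advect K w k) =
  Rsum (idx K) (fun j => Rsum (idx K) (fun l => indc j l k * (cr j l * snd (Cmul (w j) (w l))))).
Proof.
  unfold advect. rewrite Csum_eq; cbn [fst snd]. apply Rsum_ext_in; intros j _.
  rewrite Csum_eq; cbn [fst snd]. apply Rsum_ext_in; intros l _.
  unfold indc. destruct (andb _ _); [rewrite term_eq; simpl; ring|simpl; ring].
Qed.

Lemma Rsum_neg2 K F :
  Rsum (idx K) (fun j => Rsum (idx K) (fun l => F j l)) =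
  Rsum (idx K) (fun j => Rsum (idx K) (fun l => F (wneg j) (wneg l))).
Proof.
  transitivity (Rsum (idx K) (fun j => Rsum (idx K) (fun l => F (wneg j) l))).
  - symmetry. apply (Rsum_neg K (fun j => Rsum (idx K) (fun l => F j l))).
  - apply Rsum_ext_in; intros j _. symmetry. apply (Rsum_neg K (fun l => F (wneg j) l)).
Qed.

Lemma ksq_neg k : ksq (wneg k) = ksq k.
Proof. unfold ksq, wneg; simpl. rewrite !opp_IZR. ring. Qed.

Lemma indc_neg j l k : indc (wneg j) (wneg l) (wneg k) = indc j l k.
Proof.
  unfold indc, wneg; simpl.
  destruct (Z.eqb_spec (fst j + fst l) (fst k)), (Z.eqb_spec (snd j + snd l) (snd k));
  destruct (Z.eqb_spec (- fst j + - fst l) (- fst k)), (Z.eqb_spec (- snd j + - snd l) (- snd k));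
  simpl; auto; lia.
Qed.

Lemma cr_neg j l : cr (wneg j) (wneg l) = cr j l.
Proof. unfold cr. rewrite ksq_neg. unfold wneg; simpl. rewrite !opp_IZR. unfold Rdiv; ring. Qed.

Lemma advect_real K w k : real_sfield K w ->
  advect K w (wneg k) = Cconj (advect K w k).
Proof.
  intros Hw. apply injective_projections.
  - rewrite advect_fst. unfold Cconj; simpl. rewrite advect_fst, Rsum_neg2.
    apply Rsum_ext_in; intros j Hj. apply Rsum_ext_in; intros l Hl.
    rewrite indc_neg, cr_neg, (Hw j Hj), (Hw l Hl).
    unfold Cconj, Cmul; simpl. ring.
  - rewrite advect_snd. unfold Cconj; simpl. rewrite advect_snd, Rsum_neg2, <- Rsum_opp.
    apply Rsum_ext_in; intros j Hj. rewrite <- Rsum_opp. apply Rsum_ext_in; intros l Hl.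
    rewrite indc_neg, cr_neg, (Hw j Hj), (Hw l Hl).
    unfold Cconj, Cmul; simpl. ring.
Qed.

Definition tp (w : sfield) (m j l : wv) : R :=
  fst (w m) * fst (Cmul (w j) (w l)) - snd (w m) * snd (Cmul (w j) (w l)).
Definition Hq w (m j l : wv) : R := indc j l (wneg m) * (cr j l * tp w m j l).

Lemma wneg_inv k : wneg (wneg k) = k.
Proof. destruct k; unfold wneg; simpl; f_equal; lia. Qed.

Lemma Hq_anti w m j l : Hq w l j m = - Hq w m j l.
Proof.
  unfold Hq, indc, wneg; simpl.
  destruct (Z.eqb_spec (fst j + fst m) (- fst l)), (Z.eqb_spec (snd j + snd m) (- snd l));
  destruct (Z.eqb_spec (fst j + fst l) (- fst m)), (Z.eqb_spec (snd j + snd l) (- snd m));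
  simpl; try ring; try lia.
  assert (E1 : fst m = (- (fst j + fst l))%Z) by lia.
  assert (E2 : snd m = (- (snd j + snd l))%Z) by lia.
  unfold cr, tp. rewrite E1, E2, !opp_IZR, !plus_IZR.
  destruct (w m) as [xa xb], (w j) as [xc xd], (w l) as [xe xf]; unfold Cmul; simpl.
  unfold Rdiv; ring.
Qed.

Lemma triple_zero K w :
  Rsum (idx K) (fun m => Rsum (idx K) (fun j => Rsum (idx K) (fun l => Hq w m j l))) = 0.
Proof.
  set (Z := Rsum (idx K) (fun j => Rsum (idx K) (fun l => Rsum (idx K) (fun m => Hq w m j l)))).
  assert (E1 : Rsum (idx K) (fun m => Rsum (idx K) (fun j => Rsum (idx K) (fun l => Hq w m j l))) = Z).
  { etransitivity; [apply Rsum_exchange|]. apply Rsum_ext_in; intros j _. apply Rsum_exchange. }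
  assert (E2 : Rsum (idx K) (fun j => Rsum (idx K) (fun m => Rsum (idx K) (fun l => Hq w m j l))) = Z).
  { apply Rsum_ext_in; intros j _. apply Rsum_exchange. }
  assert (E3 : Rsum (idx K) (fun j => Rsum (idx K) (fun m => Rsum (idx K) (fun l => Hq w m j l))) = - Z).
  { unfold Z. rewrite <- Rsum_opp. apply Rsum_ext_in; intros j _.
    rewrite <- Rsum_opp. apply Rsum_ext_in; intros l _.
    rewrite <- Rsum_opp. apply Rsum_ext_in; intros m _. apply Hq_anti. }
  lra.
Qed.

Lemma lin2 (l : list wv) a b F G :
  a * Rsum l (fun j => Rsum l (fun i => F j i)) - b * Rsum l (fun j => Rsum l (fun i => G j i))
  = Rsum l (fun j => Rsum l (fun i => a * F j i - b * G j i)).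
Proof.
  unfold Rminus. rewrite <- !Rsum_scal, <- Rsum_opp, <- Rsum_plus. apply Rsum_ext_in; intros j _.
  rewrite <- !Rsum_scal, <- Rsum_opp, <- Rsum_plus. reflexivity.
Qed.

Lemma orth K w : real_sfield K w ->
  Rsum (idx K) (fun k => fst (w k) * fst (advect K w k) + snd (w k) * snd (advect K w k)) = 0.
Proof.
  intros Hw.
  transitivity (Rsum (idx K) (fun k =>
     (fun m => Rsum (idx K) (fun j => Rsum (idx K) (fun l => Hq w m j l))) (wneg k))).
  - apply Rsum_ext_in; intros k Hk.
    rewrite advect_fst, advect_snd.
    replace (fst (w k) * _ + snd (w k) * _) with
      (fst (w (wneg k)) * Rsum (idx K) (fun j => Rsum (idx K) (fun l => indc j l k * (cr j l * fst (Cmul (w j) (w l)))))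
       - snd (w (wneg k)) * Rsum (idx K) (fun j => Rsum (idx K) (fun l => indc j l k * (cr j l * snd (Cmul (w j) (w l)))))).
    2: { rewrite (Hw k Hk). unfold Cconj; simpl. ring. }
    rewrite lin2. apply Rsum_ext_in; intros j _. apply Rsum_ext_in; intros l _.
    unfold Hq, tp. rewrite wneg_inv. ring.
  - rewrite (Rsum_neg K (fun m => Rsum (idx K) (fun j => Rsum (idx K) (fun l => Hq w m j l)))).
    apply triple_zero.
Qed.

Definition En K (w : sfield) := Rsum (idx K) (fun k => Cnorm2 (w k)).
Definition Ef K (f : vfield) := Rsum (idx K) (fun k => Cnorm2 (fst (f k)) + Cnorm2 (snd (f k))).

Lemma ksq_ge1 K k : In k (idx K) -> 1 <= ksq k.
Proof.
  rewrite in_idx. destruct k as [a b]; simpl. intros (_ & _ & H).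
  unfold ksq; cbn [fst snd]. replace (IZR a ^ 2 + IZR b ^ 2) with (IZR a * IZR a + IZR b * IZR b) by ring.
  rewrite <- !mult_IZR.
  assert (H1 : (1 <= a * a + b * b)%Z) by nia.
  rewrite <- plus_IZR. apply IZR_le in H1. exact H1.
Qed.

Lemma sq_split eps x y : 0 < eps -> (x + y) ^ 2 <= (1 + eps) * x ^ 2 + (1 + / eps) * y ^ 2.
Proof.
  intros He.
  assert (E : (1 + eps) * x ^ 2 + (1 + / eps) * y ^ 2 - (x + y) ^ 2 = (eps * x - y) ^ 2 / eps)
    by (field; lra).
  assert (0 <= (eps * x - y) ^ 2 / eps).
  { apply Rmult_le_pos; [apply pow2_ge_0|left; apply Rinv_0_lt_compat; auto]. }
  lra.
Qed.

Lemma Cn_split eps x y : 0 < eps -> Cnorm2 (Cadd x y) <= (1 + eps) * Cnorm2 x + (1 + / eps) * Cnorm2 y.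
Proof.
  intros He. unfold Cnorm2, Cadd; simpl.
  pose proof (sq_split eps (fst x) (fst y) He). pose proof (sq_split eps (snd x) (snd y) He). lra.
Qed.

Lemma Cn_scale s x : Cnorm2 (Cscale s x) = s ^ 2 * Cnorm2 x.
Proof. unfold Cnorm2, Cscale; simpl. ring. Qed.

Lemma Cn_nonneg x : 0 <= Cnorm2 x.
Proof. unfold Cnorm2. pose proof (pow2_ge_0 (fst x)). pose proof (pow2_ge_0 (snd x)). lra. Qed.

Lemma s_bound nu h q : 0 < nu -> 0 < h -> 1 <= q -> 0 < exp (- nu * q * h) <= / (1 + nu * h).
Proof.
  intros Hn Hh Hq. split; [apply exp_pos|].
  replace (- nu * q * h) with (- (nu * q * h)) by ring. rewrite exp_Ropp.
  assert (0 < nu * h) by (apply Rmult_lt_0_compat; auto).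
  assert (nu * h <= nu * q * h) by (rewrite (Rmult_comm nu q), Rmult_assoc; nra).
  apply Rinv_le_contravar; [lra|].
  pose proof (exp_ineq1_le (nu * q * h)). lra.
Qed.

Lemma a_bound nu h q : 0 < nu -> 0 < h -> 1 <= q ->
  0 <= 2 / (nu * q) * exp (- nu * q * h / 2) * sinh (nu * q * h / 2) <= h.
Proof.
  intros Hn Hh Hq. set (x := nu * q * h / 2).
  assert (Hnq : 0 < nu * q) by (apply Rmult_lt_0_compat; lra).
  assert (Hx : 0 < x) by (unfold x; assert (0 < nu * q * h) by (apply Rmult_lt_0_compat; lra); lra).
  replace (- nu * q * h / 2) with (- x) by (unfold x; field).
  unfold sinh. set (t := exp (- x)).
  assert (Et : exp x = / t) by (unfold t; rewrite exp_Ropp, Rinv_inv; auto).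
  assert (Ht : 0 < t) by apply exp_pos.
  assert (Ht1 : t <= 1).
  { unfold t. rewrite exp_Ropp. rewrite <- Rinv_1. apply Rinv_le_contravar; [lra|].
    pose proof (exp_ineq1_le x). lra. }
  assert (Ht2 : 1 - x <= t) by (unfold t; pose proof (exp_ineq1_le (- x)); lra).
  rewrite Et.
  replace (2 / (nu * q) * t * ((/ t - t) / 2)) with ((1 - t * t) / (nu * q)) by (field; split; nra).
  split.
  - apply Rmult_le_pos; [nra|left; apply Rinv_0_lt_compat; auto].
  - apply (Rmult_le_reg_r (nu * q)); auto. unfold Rdiv. rewrite Rmult_assoc, Rinv_l by lra.
    unfold x in Ht2. nra.
Qed.

Lemma curl_bound K lamM f k : force_ok K lamM f -> In k (idx K) ->
  Cnorm2 (curl f k) <= lamM * (Cnorm2 (fst (f k)) + Cnorm2 (snd (f k))).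
Proof.
  intros (_ & _ & _ & Hs) Hk.
  destruct (Rle_lt_dec (ksq k) lamM) as [Hl|Hl].
  - apply Rle_trans with (ksq k * (Cnorm2 (fst (f k)) + Cnorm2 (snd (f k)))).
    + unfold curl, ksq, Cnorm2, Cadd, Cmul, Cscale, Ci; simpl.
      destruct (f k) as [[a b] [c d]]; simpl.
      set (u := IZR (fst k)); set (v := IZR (snd k)).
      pose proof (pow2_ge_0 (u * b + v * d)); pose proof (pow2_ge_0 (u * a + v * c)).
      ring_simplify. nra.
    + apply Rmult_le_compat_r; auto. pose proof (Cn_nonneg (fst (f k))); pose proof (Cn_nonneg (snd (f k))); lra.
  - unfold curl. rewrite Hs by (intros [_ H]; lra). unfold Cnorm2, Cadd, Cmul, Cscale, Ci, C0; simpl.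
    apply Req_le; ring.
Qed.

Lemma curl_neg K lamM f k : force_ok K lamM f -> curl f (wneg k) = Cconj (curl f k).
Proof.
  intros (Hr & _). unfold curl. rewrite Hr. unfold wneg; cbn [fst snd]. rewrite !opp_IZR.
  destruct (f k) as [[a b] [c d]]; unfold Cconj, Cadd, Cmul, Cscale, Ci; simpl. f_equal; ring.
Qed.

Lemma step_real nu h K lamM f w : force_ok K lamM f -> real_sfield K w ->
  real_sfield K (Sstep nu h K (curl f) w).
Proof.
  intros Hf Hw k Hk. unfold Sstep. rewrite ksq_neg, (Hw k Hk), (advect_real K w k Hw), (curl_neg K lamM f k Hf).
  destruct (w k) as [a b], (advect K w k) as [c d], (curl f k) as [e1 e2].
  unfold Cconj, Cadd, Cscale; simpl. f_equal; ring.
Qed.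

Lemma step_pt nu h K g w k : 0 < nu -> 0 < h -> In k (idx K) ->
  Cnorm2 (Sstep nu h K g w k) <=
  / (1 + nu * h) * (Cnorm2 (w k) - 2 * h * (fst (w k) * fst (advect K w k) + snd (w k) * snd (advect K w k))
                    + h ^ 2 * Cnorm2 (advect K w k))
  + (h ^ 2 + h / nu) * Cnorm2 (g k).
Proof.
  intros Hn Hh Hk. unfold Sstep.
  pose proof (ksq_ge1 K k Hk) as Hq.
  set (s := exp (- nu * ksq k * h)).
  set (a := 2 / (nu * ksq k) * exp (- nu * ksq k * h / 2) * sinh (nu * ksq k * h / 2)).
  set (v := Cadd (w k) (Cscale (- h) (advect K w k))).
  assert (Hnh : 0 < nu * h) by (apply Rmult_lt_0_compat; auto).
  eapply Rle_trans; [apply (Cn_split (nu * h)); auto|].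
  rewrite !Cn_scale.
  destruct (s_bound nu h (ksq k) Hn Hh Hq) as [Hs1 Hs2]. fold s in Hs1, Hs2.
  destruct (a_bound nu h (ksq k) Hn Hh Hq) as [Ha1 Ha2]. fold a in Ha1, Ha2.
  assert (E : Cnorm2 v = Cnorm2 (w k) - 2 * h * (fst (w k) * fst (advect K w k) + snd (w k) * snd (advect K w k))
                    + h ^ 2 * Cnorm2 (advect K w k)).
  { unfold v, Cnorm2, Cadd, Cscale; simpl. ring. }
  rewrite <- E.
  assert (Hv := Cn_nonneg v). assert (Hg := Cn_nonneg (g k)).
  apply Rplus_le_compat.
  - assert (H2 : s ^ 2 <= (/ (1 + nu * h)) ^ 2) by (apply pow_incr; lra).
    replace (/ (1 + nu * h) * Cnorm2 v) with ((1 + nu * h) * (/ (1 + nu * h)) ^ 2 * Cnorm2 v)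
      by (field; lra).
    rewrite <- Rmult_assoc. apply Rmult_le_compat_r; auto. apply Rmult_le_compat_l; lra.
  - replace (h ^ 2 + h / nu) with ((1 + / (nu * h)) * h ^ 2) by (field; lra).
    rewrite <- Rmult_assoc. apply Rmult_le_compat_r; auto.
    apply Rmult_le_compat_l.
    + assert (0 < / (nu * h)) by (apply Rinv_0_lt_compat; auto). lra.
    + apply pow_incr; lra.
Qed.

Lemma step_sum nu h K lamM f w : 0 < nu -> 0 < h -> force_ok K lamM f -> real_sfield K w ->
  En K (Sstep nu h K (curl f) w) <=
  / (1 + nu * h) * (En K w + h ^ 2 * En K (advect K w)) + (h ^ 2 + h / nu) * (lamM * Ef K f).
Proof.
  intros Hn Hh Hf Hw. unfold En, Ef.
  eapply Rle_trans.
  { apply Rsum_le_in. intros k Hk. apply (step_pt nu h K (curl f) w k Hn Hh Hk). }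
  assert (Hh2 : 0 <= h ^ 2 + h / nu).
  { assert (0 < h / nu) by (unfold Rdiv; apply Rmult_lt_0_compat; auto; apply Rinv_0_lt_compat; auto).
    pose proof (pow2_ge_0 h). lra. }
  eapply Rle_trans.
  { apply Rsum_le_in. intros k Hk. apply Rplus_le_compat_l.
    apply Rmult_le_compat_l; [exact Hh2|]. apply (curl_bound K lamM f k Hf Hk). }
  rewrite Rsum_plus, !Rsum_scal.
  unfold Rminus. rewrite !Rsum_plus, Rsum_opp, Rsum_scal, Rsum_scal, (orth K w Hw). right. ring.
Qed.

Definition Mc K := IZR (2 * Z.of_nat K * Z.of_nat K).

Lemma cr_bound K j l : In j (idx K) -> In l (idx K) -> Rabs (cr j l) <= Mc K.
Proof.
  intros Hj Hl. pose proof (ksq_ge1 K j Hj) as Hq.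
  apply in_idx in Hj; apply in_idx in Hl.
  unfold cr, Rdiv. rewrite Rabs_mult, Rabs_inv, (Rabs_pos_eq (ksq j)) by lra.
  replace (IZR (fst j) * IZR (snd l) - IZR (snd j) * IZR (fst l))
    with (IZR (fst j * snd l - snd j * fst l)) by (rewrite minus_IZR, !mult_IZR; ring).
  rewrite Rabs_Zabs.
  assert (HZ : (Z.abs (fst j * snd l - snd j * fst l) <= 2 * Z.of_nat K * Z.of_nat K)%Z).
  { destruct Hj as (H1 & H2 & _), Hl as (H3 & H4 & _).
    apply Z.abs_le. split; nia. }
  apply IZR_le in HZ. unfold Mc.
  assert (0 < / ksq j <= 1).
  { split; [apply Rinv_0_lt_compat; lra|]. rewrite <- Rinv_1. apply Rinv_le_contravar; lra. }
  assert (0 <= IZR (Z.abs (fst j * snd l - snd j * fst l))) by (apply IZR_le; lia).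
  nra.
Qed.

Lemma prod_bound x y W : x ^ 2 <= W -> y ^ 2 <= W -> Rabs (x * y) <= W.
Proof.
  intros Hx Hy. assert (0 <= W) by (pose proof (pow2_ge_0 x); lra).
  assert (Hxy : (x * y) ^ 2 <= W ^ 2).
  { replace ((x * y) ^ 2) with (x ^ 2 * y ^ 2) by ring.
    replace (W ^ 2) with (W * W) by ring. apply Rmult_le_compat; auto; apply pow2_ge_0. }
  destruct (Rle_lt_dec (Rabs (x * y)) W) as [|Hlt]; auto. exfalso.
  rewrite <- (pow2_abs (x * y)) in Hxy. set (t := Rabs (x * y)) in *.
  assert (Hp : 0 < (t - W) * (t + W)) by (apply Rmult_lt_0_compat; lra).
  replace ((t - W) * (t + W)) with (t ^ 2 - W ^ 2) in Hp by ring. lra.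
Qed.

Lemma comp_bound K w j : In j (idx K) -> fst (w j) ^ 2 <= En K w /\ snd (w j) ^ 2 <= En K w.
Proof.
  intros Hj. assert (H := Rsum_term_le (idx K) (fun k => Cnorm2 (w k)) j Hj (fun y _ => Cn_nonneg (w y))).
  unfold En. unfold Cnorm2 in *. pose proof (pow2_ge_0 (fst (w j))). pose proof (pow2_ge_0 (snd (w j))).
  cbv beta in H. lra.
Qed.

Lemma indc_bound j l k : 0 <= indc j l k <= 1.
Proof. unfold indc. destruct (andb _ _); lra. Qed.

Lemma term_bound K w j l k (X : R) : In j (idx K) -> In l (idx K) ->
  Rabs X <= 2 * En K w ->
  Rabs (indc j l k * (cr j l * X)) <= 2 * Mc K * En K w.
Proof.
  intros Hj Hl HX. rewrite !Rabs_mult. pose proof (indc_bound j l k).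
  rewrite (Rabs_pos_eq (indc j l k)) by lra. pose proof (cr_bound K j l Hj Hl).
  pose proof (Rabs_pos (cr j l)). pose proof (Rabs_pos X).
  assert (Rabs (cr j l) * Rabs X <= Mc K * (2 * En K w)) by (apply Rmult_le_compat; auto).
  assert (0 <= Rabs (cr j l) * Rabs X) by (apply Rmult_le_pos; auto).
  nra.
Qed.

Lemma dsum_bound K (F : wv -> wv -> R) c :
  (forall j l, In j (idx K) -> In l (idx K) -> Rabs (F j l) <= c) ->
  Rabs (Rsum (idx K) (fun j => Rsum (idx K) (fun l => F j l))) <=
  INR (length (idx K)) * (INR (length (idx K)) * c).
Proof.
  intros H. eapply Rle_trans; [apply Rsum_abs|]. apply Rsum_const_le. intros j Hj.
  eapply Rle_trans; [apply Rsum_abs|]. apply Rsum_const_le. intros l Hl. auto.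
Qed.

Definition Bn K := INR (length (idx K)) * (INR (length (idx K)) * (2 * Mc K)).

Lemma advect_pt K w k : Cnorm2 (advect K w k) <= 2 * Bn K ^ 2 * En K w ^ 2.
Proof.
  assert (HW : forall j l, In j (idx K) -> In l (idx K) ->
    Rabs (fst (Cmul (w j) (w l))) <= 2 * En K w /\ Rabs (snd (Cmul (w j) (w l))) <= 2 * En K w).
  { intros j l Hj Hl. destruct (comp_bound K w j Hj), (comp_bound K w l Hl).
    unfold Cmul; simpl. split.
    - eapply Rle_trans; [apply Rabs_triang|]. rewrite Rabs_Ropp.
      pose proof (prod_bound (fst (w j)) (fst (w l)) _ H H1).
      pose proof (prod_bound (snd (w j)) (snd (w l)) _ H0 H2). lra.
    - eapply Rle_trans; [apply Rabs_triang|].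
      pose proof (prod_bound (fst (w j)) (snd (w l)) _ H H2).
      pose proof (prod_bound (snd (w j)) (fst (w l)) _ H0 H1). lra. }
  assert (H1 : Rabs (fst (advect K w k)) <= Bn K * En K w).
  { rewrite advect_fst. eapply Rle_trans; [apply (dsum_bound K _ (2 * Mc K * En K w))|].
    - intros j l Hj Hl. apply term_bound; auto; apply (HW j l Hj Hl).
    - unfold Bn. right; ring. }
  assert (H2 : Rabs (snd (advect K w k)) <= Bn K * En K w).
  { rewrite advect_snd. eapply Rle_trans; [apply (dsum_bound K _ (2 * Mc K * En K w))|].
    - intros j l Hj Hl. apply term_bound; auto; apply (HW j l Hj Hl).
    - unfold Bn. right; ring. }
  unfold Cnorm2.
  assert (fst (advect K w k) ^ 2 <= (Bn K * En K w) ^ 2).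
  { rewrite <- (pow2_abs (fst _)). apply pow_incr. split; auto. apply Rabs_pos. }
  assert (snd (advect K w k) ^ 2 <= (Bn K * En K w) ^ 2).
  { rewrite <- (pow2_abs (snd _)). apply pow_incr. split; auto. apply Rabs_pos. }
  nra.
Qed.

Lemma advect_sum K w : En K (advect K w) <= INR (length (idx K)) * (2 * Bn K ^ 2 * En K w ^ 2).
Proof. unfold En at 1. apply Rsum_const_le. intros k _. apply advect_pt. Qed.

Lemma En_nonneg K w : 0 <= En K w.
Proof. unfold En. apply Rsum_nonneg. intros; apply Cn_nonneg. Qed.

Lemma Ef_pos K lamM f : force_ok K lamM f -> (exists k, f k <> (C0, C0)) -> 0 < Ef K f.
Proof.
  intros Hf [k Hk]. destruct Hf as (_ & _ & _ & Hs).
  assert (Hin : In k (idx K)).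
  { destruct (in_dec (fun x y : wv => ltac:(decide equality; apply Z.eq_dec)) k (idx K)); auto.
    exfalso. apply Hk. apply Hs. tauto. }
  assert (Hpos : 0 < Cnorm2 (fst (f k)) + Cnorm2 (snd (f k))).
  { destruct (f k) as [[a b] [c d]] eqn:E. unfold Cnorm2; simpl.
    destruct (Rlt_dec 0 (a ^ 2 + b ^ 2 + (c ^ 2 + d ^ 2))) as [|Hn]; auto. exfalso. apply Hk.
    pose proof (pow2_ge_0 a); pose proof (pow2_ge_0 b); pose proof (pow2_ge_0 c); pose proof (pow2_ge_0 d).
    assert (a = 0) by nra. assert (b = 0) by nra. assert (c = 0) by nra. assert (d = 0) by nra.
    subst. reflexivity. }
  eapply Rlt_le_trans; [exact Hpos|].
  apply (Rsum_term_le (idx K) (fun k => Cnorm2 (fst (f k)) + Cnorm2 (snd (f k))) k Hin).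
  intros y _. pose proof (Cn_nonneg (fst (f y))); pose proof (Cn_nonneg (snd (f y))). lra.
Qed.

Theorem lemma1 :
  forall (nu : R) (K : nat) (lamM : R) (f : vfield) (c0 : R),
    0 < nu -> 1 <= lamM ->
    force_ok K lamM f ->
    (exists k, f k <> (C0, C0)) ->
    c0 > 6 * lamM / lambda0 ->
    forall L : R, 0 < L ->
      exists h0 : R, 0 < h0 /\
        forall h : R, 0 < h <= h0 ->
          exists N : nat,
            forall w0 : sfield,
              real_sfield K w0 -> snorm K w0 < L ->
              forall n : nat, (N <= n)%nat ->
                snorm K (Nat.iter n (Sstep nu h K (curl f)) w0)
                  < c0 * vnorm K f / (nu * sqrt lambda0).
Proof.
  intros nu K lamM f c0 Hnu HlamM Hf Hex Hc0 L HL.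
  unfold lambda0 in *. rewrite sqrt_1, Rmult_1_r. rewrite Rdiv_1_r in Hc0.
  pose proof (Ef_pos K lamM f Hf Hex) as HEf. set (Efv := Ef K f) in *.
  set (Cc := INR (length (idx K)) * (2 * Bn K ^ 2)).
  assert (HCc : 0 <= Cc).
  { unfold Cc. apply Rmult_le_pos; [apply pos_INR|]. pose proof (pow2_ge_0 (Bn K)); lra. }
  assert (HPI : 0 < 4 * PI ^ 2) by (pose proof PI_RGT_0; nra).
  set (T := c0 ^ 2 * Efv / nu ^ 2).
  assert (Hnu2 : 0 < nu ^ 2) by nra.
  assert (HT8 : 8 * lamM * Efv / nu ^ 2 < T).
  { unfold T, Rdiv. apply Rmult_lt_compat_r; [apply Rinv_0_lt_compat; auto|].
    apply Rmult_lt_compat_r; auto.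
    assert (6 * lamM * (6 * lamM) < c0 * c0) by (apply Rmult_le_0_lt_compat; lra). nra. }
  assert (H8 : 0 <= 8 * lamM * Efv / nu ^ 2).
  { unfold Rdiv. apply Rmult_le_pos; [nra|left; apply Rinv_0_lt_compat; auto]. }
  set (R0 := L ^ 2 / (4 * PI ^ 2) + T).
  assert (HL2 : 0 < L ^ 2 / (4 * PI ^ 2)).
  { unfold Rdiv. apply Rmult_lt_0_compat; [nra|apply Rinv_0_lt_compat; auto]. }
  assert (HR0 : 0 < R0) by (unfold R0; lra).
  set (D := Cc * R0 + nu ^ 2).
  assert (HD : 0 < D) by (unfold D; assert (0 <= Cc * R0) by (apply Rmult_le_pos; lra); lra).
  exists (Rmin (/ nu) (3 * nu / (4 * D))). split.
  { apply Rmin_glb_lt; [apply Rinv_0_lt_compat; auto|].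
    unfold Rdiv. apply Rmult_lt_0_compat; [lra|apply Rinv_0_lt_compat; lra]. }
  intros h [Hh Hh0].
  assert (Hh1 : h <= / nu) by (eapply Rle_trans; [exact Hh0|apply Rmin_l]).
  assert (Hh2 : h <= 3 * nu / (4 * D)) by (eapply Rle_trans; [exact Hh0|apply Rmin_r]).
  assert (Hnh : 0 < nu * h) by (apply Rmult_lt_0_compat; auto).
  assert (Hnh1 : nu * h <= 1).
  { replace 1 with (nu * / nu) by (field; lra). apply Rmult_le_compat_l; lra. }
  set (rho := 1 - nu * h / 4).
  set (Fs := 4 * (h + / nu) * lamM * Efv / nu).
  assert (HFs0 : 0 <= Fs).
  { unfold Fs, Rdiv. apply Rmult_le_pos; [|left; apply Rinv_0_lt_compat; auto].
    assert (0 < / nu) by (apply Rinv_0_lt_compat; auto). repeat apply Rmult_le_pos; lra. }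
  assert (HFs : Fs <= 8 * lamM * Efv / nu ^ 2).
  { unfold Fs. replace (8 * lamM * Efv / nu ^ 2) with (4 * (/ nu + / nu) * lamM * Efv / nu) by (field; lra).
    unfold Rdiv. apply Rmult_le_compat_r; [left; apply Rinv_0_lt_compat; auto|].
    apply Rmult_le_compat_r; [lra|]. apply Rmult_le_compat_r; [lra|]. lra. }
  assert (Step : forall w, real_sfield K w -> En K w <= R0 ->
     En K (Sstep nu h K (curl f) w) <= rho * En K w + (nu * h / 4) * Fs).
  { intros w Hw HwR. eapply Rle_trans; [apply (step_sum nu h K lamM f w); auto|].
    fold Efv. set (W := En K w). assert (HW0 : 0 <= W) by apply En_nonneg.
    assert (HA : En K (advect K w) <= Cc * R0 * W).
    { eapply Rle_trans; [apply advect_sum|]. fold W. unfold Cc.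
      replace (INR (length (idx K)) * (2 * Bn K ^ 2 * W ^ 2)) with
        (INR (length (idx K)) * (2 * Bn K ^ 2) * W * W) by ring.
      apply Rmult_le_compat_r; auto. apply Rmult_le_compat_l; [exact HCc|exact HwR]. }
    assert (Ecoef : (h ^ 2 + h / nu) * (lamM * Efv) = nu * h / 4 * Fs) by (unfold Fs; field; lra).
    rewrite Ecoef. apply Rplus_le_compat_r.
    assert (Hk : / (1 + nu * h) * (1 + h ^ 2 * (Cc * R0)) <= rho).
    { unfold rho. apply (Rmult_le_reg_l (1 + nu * h)); [lra|].
      rewrite <- Rmult_assoc, Rinv_r, Rmult_1_l by lra.
      assert (h * D <= 3 * nu / 4).
      { replace (3 * nu / 4) with ((3 * nu / (4 * D)) * D) by (field; lra).
        apply Rmult_le_compat_r; lra. }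
      unfold D in H. nra. }
    assert (0 < / (1 + nu * h)) by (apply Rinv_0_lt_compat; lra).
    assert (h ^ 2 * En K (advect K w) <= h ^ 2 * (Cc * R0) * W)
      by (rewrite Rmult_assoc; apply Rmult_le_compat_l; [apply pow2_ge_0|lra]).
    apply Rle_trans with (/ (1 + nu * h) * (1 + h ^ 2 * (Cc * R0)) * W).
    + replace (/ (1 + nu * h) * (1 + h ^ 2 * (Cc * R0)) * W) with
        (/ (1 + nu * h) * (W + h ^ 2 * (Cc * R0) * W)) by ring.
      apply Rmult_le_compat_l; lra.
    + apply Rmult_le_compat_r; auto. }
  assert (Hrho : 0 < rho < 1) by (unfold rho; lra).
  set (gap := T - 8 * lamM * Efv / nu ^ 2).
  assert (Hgap : 0 < gap) by (unfold gap; lra).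
  destruct (pow_lt_1_zero rho ltac:(rewrite Rabs_pos_eq; lra) (gap / R0)
     ltac:(unfold Rdiv; apply Rmult_lt_0_compat; [lra|apply Rinv_0_lt_compat; lra])) as [N HN].
  exists N. intros w0 Hw0 Hw0L.
  assert (He0 : En K w0 < L ^ 2 / (4 * PI ^ 2)).
  { unfold snorm in Hw0L. change (Rsum (idx K) (fun k => Cnorm2 (w0 k))) with (En K w0) in Hw0L.
    pose proof (En_nonneg K w0).
    assert (0 <= 4 * PI ^ 2 * En K w0) by (apply Rmult_le_pos; lra).
    pose proof (sqrt_pos (4 * PI ^ 2 * En K w0)).
    assert (H2 : sqrt (4 * PI ^ 2 * En K w0) * sqrt (4 * PI ^ 2 * En K w0) < L ^ 2)
      by (replace (L ^ 2) with (L * L) by ring; apply Rmult_le_0_lt_compat; lra).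
    rewrite sqrt_sqrt in H2 by auto.
    apply (Rmult_lt_reg_l (4 * PI ^ 2)); auto. unfold Rdiv. rewrite <- Rmult_assoc.
    replace (4 * PI ^ 2 * L ^ 2 * / (4 * PI ^ 2)) with (L ^ 2) by (field; apply Rgt_not_eq, PI_RGT_0). lra. }
  assert (Inv : forall n, real_sfield K (Nat.iter n (Sstep nu h K (curl f)) w0) /\
     En K (Nat.iter n (Sstep nu h K (curl f)) w0) <= R0 /\
     En K (Nat.iter n (Sstep nu h K (curl f)) w0) - Fs <= rho ^ n * R0).
  { induction n as [|n [IH1 [IH2 IH3]]].
    - simpl. split; [auto|]. split; unfold R0; lra.
    - change (Nat.iter (S n) (Sstep nu h K (curl f)) w0) with
        (Sstep nu h K (curl f) (Nat.iter n (Sstep nu h K (curl f)) w0)).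
      pose proof (Step _ IH1 IH2) as HS.
      split; [apply (step_real nu h K lamM f); auto|]. split.
      + assert (rho * En K (Nat.iter n (Sstep nu h K (curl f)) w0) <= rho * R0)
          by (apply Rmult_le_compat_l; lra).
        assert (Fs <= R0) by (unfold R0; lra). unfold rho in *. nra.
      + simpl pow. assert (rho * (En K (Nat.iter n (Sstep nu h K (curl f)) w0) - Fs) <= rho * (rho ^ n * R0))
          by (apply Rmult_le_compat_l; lra).
        unfold rho in *. nra. }
  intros n Hn. destruct (Inv n) as [_ [_ H3]].
  specialize (HN n Hn). rewrite Rabs_pos_eq in HN by (apply pow_le; lra).
  assert (HlT : En K (Nat.iter n (Sstep nu h K (curl f)) w0) < T).
  { assert (rho ^ n * R0 < gap).
    { apply (Rmult_lt_compat_r R0) in HN; auto. unfold Rdiv in HN.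
      rewrite Rmult_assoc, Rinv_l, Rmult_1_r in HN by lra. exact HN. }
    unfold gap in *. lra. }
  set (e := En K (Nat.iter n (Sstep nu h K (curl f)) w0)) in *.
  unfold snorm, vnorm.
  change (Rsum (idx K) (fun k : wv => Cnorm2 (Nat.iter n (Sstep nu h K (curl f)) w0 k))) with e.
  change (Rsum (idx K) (fun k : wv => Cnorm2 (fst (f k)) + Cnorm2 (snd (f k)))) with Efv.
  assert (He : 0 <= e) by apply En_nonneg.
  assert (Hc0p : 0 < c0) by lra.
  assert (HEf4 : 0 <= 4 * PI ^ 2 * Efv) by (apply Rmult_le_pos; lra).
  assert (Hpos : 0 <= c0 * sqrt (4 * PI ^ 2 * Efv) / nu).
  { unfold Rdiv. apply Rmult_le_pos; [apply Rmult_le_pos; [lra|apply sqrt_pos]|left; apply Rinv_0_lt_compat; auto]. }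
  Show.   rewrite <- (sqrt_pow2 _ Hpos). apply sqrt_lt_1_alt. split; [apply Rmult_le_pos; lra|].
  replace ((c0 * sqrt (4 * PI ^ 2 * Efv) / nu) ^ 2) with (c0 ^ 2 * (sqrt (4 * PI ^ 2 * Efv)) ^ 2 / nu ^ 2)
    by (field; lra).
  rewrite pow2_sqrt by auto.
  replace (c0 ^ 2 * (4 * PI ^ 2 * Efv) / nu ^ 2) with (4 * PI ^ 2 * T) by (unfold T; field; lra).
  apply Rmult_lt_compat_l; auto.
Qed.
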